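(* Let $T>0$, $r\ge0$, $\rho\in[-1,1]$, $\alpha\ge0$, let $\mu(S,t),\sigma(S,t)\ge0$ be functions on $(0,\infty)\times[0,T]$ and $a(H,t),b(H,t)$ functions on $(0,\infty)\times[0,T]$ with $b$ nonvanishing, and set $\tilde\mu(S,H,t)=\mu(S,t)-(a(H,t)-r)\rho\sigma(S,t)/b(H,t)$. Define, for $S,H>0$, $t\in[0,T]$, $v,p,z\in\mathbb R$, $$h(S,H,t,v,p,z)=\big(\tilde\mu(S,H,t)+\alpha\sqrt{1-\rho^2}\,\sigma(S,t)\,\mathrm{sgn}(p)\big)Sp+rHz-rv.$$ Assume there are constants $C_1,C_2>0$ with $|\sigma(S_1,t)-\sigma(S_2,t)|\le C_1|\ln S_1-\ln S_2|$ and $\sigma(S,t)\le C_2\sqrt{S(1+\ln S)}$ for all $S,S_1,S_2>0$, $t\in[0,T]$. Assume further that there are constants $K,C_5>0$ with $|\tilde\mu(S,H,t)|\le K(1+|\ln S|+|\ln H|)$ and $|\tilde\mu(S_1,H_1,t)-\tilde\mu(S_2,H_2,t)|\le C_5|\ln S_1-\ln S_2|$ for all $S,H,S_i,H_i>0$, $t\in[0,T]$. Then: (iii) there exist functions $d_1,d_2$ with $0\le d_1(S,H,t)\le K'S(1+|\ln S|+|\ln H|)$ and $0\le d_2(S,H,t)\le K'H(1+|\ln S|+|\ln H|)$ for some constant $K'$, such that $|h(S,H,t,v,p,z)-h(S,H,t,v,q,w)|\le d_1(S,H,t)|p-q|+d_2(S,H,t)|z-w|$ for all $S,H>0$, $t\in[0,T]$,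 $v,p,q,z,w\in\mathbb R$; and (iv) there exists $m_1>0$ such that $$\Big|h\Big(S_1,H_1,t,v,\frac{p}{S_1},\frac{q}{H_1}\Big)-h\Big(S_2,H_2,t,v,\frac{p}{S_2},\frac{q}{H_2}\Big)\Big|\le m_1\big(1+\sqrt{p^2+q^2}\big)\Big[\Big|\ln\frac{S_1}{S_2}\Big|+\Big|\ln\frac{H_1}{H_2}\Big|\Big]$$ for all $S_1,H_1,S_2,H_2>0$, $t\in[0,T]$, $v,p,q\in\mathbb R$.
   Context: $h$ is the first-order part of the writer's pricing PDE for an option on a non-traded asset $S$ hedged with a correlated traded asset $H$; properties (iii) and (iv) are the hypotheses on the nonlinearity needed for a comparison principle for the operator $v_t+\frac12\sigma^2S^2v_{SS}+\rho\sigma bSHv_{SH}+\frac12b^2H^2v_{HH}+h(S,H,t,v,v_S,v_H)$. Here $\mathrm{sgn}$ denotes the sign function. *)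

(* Defs.v *)
From Stdlib Require Import Reals.
Open Scope R_scope.

Definition sgn (p : R) : R :=
  match Rlt_dec 0 p with
  | left _ => 1
  | right _ => match Rlt_dec p 0 with left _ => -1 | right _ => 0 end
  end.

Definition mu_tilde (r rho : R) (mu sigma a b : R -> R -> R)
  (S H t : R) : R :=
  mu S t - (a H t - r) * rho * sigma S t / b H t.

Definition hfun (r rho alpha : R) (mu sigma a b : R -> R -> R)
  (S H t v p z : R) : R :=
  (mu_tilde r rho mu sigma a b S H t
     + alpha * sqrt (1 - rho ^ 2) * sigma S t * sgn p) * S * p
  + r * H * z - r * v.

(* Main.v *)
Require Import Defs.
From Stdlib Require Import Reals Lra Psatz.
Open Scope R_scope.

Lemma sgn_mul_abs p : sgn p * p = Rabs p.
Proof.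
  unfold sgn; destruct (Rlt_dec 0 p).
  - rewrite Rabs_pos_eq; lra.
  - destruct (Rlt_dec p 0).
    + rewrite Rabs_left; lra.
    + assert (p = 0) by lra; subst; rewrite Rabs_R0; ring.
Qed.

Lemma sgn_div p S : 0 < S -> sgn (p / S) = sgn p.
Proof.
  intros HS. assert (Hi : 0 < / S) by (apply Rinv_0_lt_compat; lra).
  unfold sgn, Rdiv.
  destruct (Rlt_dec 0 (p * / S)) as [h|h]; destruct (Rlt_dec 0 p) as [h'|h']; auto.
  - exfalso. destruct (Rlt_dec p 0). nra. assert (p = 0) by lra. subst. lra.
  - exfalso. apply h. nra.
  - destruct (Rlt_dec (p * / S) 0); destruct (Rlt_dec p 0); auto; exfalso; nra.
Qed.

Lemma ln_div' a c : 0 < a -> 0 < c -> ln (a / c) = ln a - ln c.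
Proof.
  intros. unfold Rdiv. rewrite ln_mult, ln_Rinv; try lra.
  apply Rinv_0_lt_compat; lra.
Qed.

Theorem lemmaA2
  (T r rho alpha : R) (mu sigma a b : R -> R -> R)
  (HT : 0 < T) (Hr : 0 <= r) (Hrho : -1 <= rho <= 1) (Halpha : 0 <= alpha)
  (Hmu_nonneg : forall S t, 0 < S -> 0 <= t <= T -> 0 <= mu S t)
  (Hsigma_nonneg : forall S t, 0 < S -> 0 <= t <= T -> 0 <= sigma S t)
  (Hb : forall H t, 0 < H -> 0 <= t <= T -> b H t <> 0)
  (C1 C2 : R) (HC1 : 0 < C1) (HC2 : 0 < C2)
  (Hsig_lip : forall S1 S2 t, 0 < S1 -> 0 < S2 -> 0 <= t <= T ->
     Rabs (sigma S1 t - sigma S2 t) <= C1 * Rabs (ln S1 - ln S2))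
  (Hsig_growth : forall S t, 0 < S -> 0 <= t <= T ->
     sigma S t <= C2 * sqrt (S * (1 + ln S)))
  (K C5 : R) (HK : 0 < K) (HC5 : 0 < C5)
  (Hmut_growth : forall S H t, 0 < S -> 0 < H -> 0 <= t <= T ->
     Rabs (mu_tilde r rho mu sigma a b S H t)
       <= K * (1 + Rabs (ln S) + Rabs (ln H)))
  (Hmut_lip : forall S1 H1 S2 H2 t, 0 < S1 -> 0 < H1 -> 0 < S2 -> 0 < H2 ->
     0 <= t <= T ->
     Rabs (mu_tilde r rho mu sigma a b S1 H1 t
           - mu_tilde r rho mu sigma a b S2 H2 t)
       <= C5 * Rabs (ln S1 - ln S2)) :
  (* (iii) *)
  (exists (K' : R) (d1 d2 : R -> R -> R -> R),
     (forall S H t, 0 < S -> 0 < H -> 0 <= t <= T ->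
        0 <= d1 S H t <= K' * S * (1 + Rabs (ln S) + Rabs (ln H)) /\
        0 <= d2 S H t <= K' * H * (1 + Rabs (ln S) + Rabs (ln H))) /\
     (forall S H t v p q z w, 0 < S -> 0 < H -> 0 <= t <= T ->
        Rabs (hfun r rho alpha mu sigma a b S H t v p z
              - hfun r rho alpha mu sigma a b S H t v q w)
          <= d1 S H t * Rabs (p - q) + d2 S H t * Rabs (z - w)))
  /\
  (* (iv) *)
  (exists m1 : R, 0 < m1 /\
     forall S1 H1 S2 H2 t v p q, 0 < S1 -> 0 < H1 -> 0 < S2 -> 0 < H2 ->
       0 <= t <= T ->
       Rabs (hfun r rho alpha mu sigma a b S1 H1 t v (p / S1) (q / H1)
             - hfun r rho alpha mu sigma a b S2 H2 t v (p / S2) (q / H2))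
         <= m1 * (1 + sqrt (p ^ 2 + q ^ 2))
              * (Rabs (ln (S1 / S2)) + Rabs (ln (H1 / H2)))).
Proof.
  set (c := alpha * sqrt (1 - rho ^ 2)).
  assert (Hsq0 : 0 <= sqrt (1 - rho ^ 2)) by apply sqrt_pos.
  assert (Hsq1 : sqrt (1 - rho ^ 2) <= 1).
  { apply Rle_trans with (sqrt 1); [apply sqrt_le_1_alt; nra | rewrite sqrt_1; lra]. }
  assert (Hc0 : 0 <= c) by (unfold c; nra).
  assert (Hc1 : c <= alpha) by (unfold c; nra).
  assert (Hsigb : forall S t, 0 < S -> 0 <= t <= T ->
            sigma S t <= C2 + C1 * Rabs (ln S)).
  { intros S t HS Ht.
    pose proof (Hsig_lip S 1 t HS ltac:(lra) Ht) as L.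
    rewrite ln_1, Rminus_0_r in L.
    pose proof (Hsig_growth 1 t ltac:(lra) Ht) as G.
    rewrite ln_1, Rplus_0_r, Rmult_1_l, sqrt_1, Rmult_1_r in G.
    pose proof (Rle_abs (sigma S t - sigma 1 t)). lra. }
  split.
  - set (m := mu_tilde r rho mu sigma a b).
    exists (K + alpha * (C1 + C2) + r).
    exists (fun S H t => S * (Rabs (m S H t) + c * sigma S t)).
    exists (fun S H t => r * H).
    split.
    + intros S H t HS HH Ht.
      pose proof (Hsigma_nonneg S t HS Ht).
      pose proof (Hsigb S t HS Ht).
      pose proof (Hmut_growth S H t HS HH Ht). fold m in H2.
      pose proof (Rabs_pos (m S H t)).
      pose proof (Rabs_pos (ln S)). pose proof (Rabs_pos (ln H)).
      assert (E1 : c * sigma S t <= alpha * (C1 + C2) * (1 + Rabs (ln S) + Rabs (ln H))).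
      { apply Rle_trans with (alpha * sigma S t). nra.
        rewrite Rmult_assoc. apply Rmult_le_compat_l; [lra|].
        assert (C1 * Rabs (ln S) <= C1 * (1 + Rabs (ln S) + Rabs (ln H))) by
          (apply Rmult_le_compat_l; lra).
        nra. }
      split; split.
      * apply Rmult_le_pos; [lra| nra].
      * assert (Rabs (m S H t) + c * sigma S t <=
                (K + alpha * (C1 + C2) + r) * (1 + Rabs (ln S) + Rabs (ln H))) by nra.
        nra.
      * nra.
      * assert (r <= (K + alpha * (C1 + C2) + r) * (1 + Rabs (ln S) + Rabs (ln H))).
        { assert (0 <= alpha * (C1 + C2)) by nra. nra. }
        replace ((K + alpha * (C1 + C2) + r) * H * (1 + Rabs (ln S) + Rabs (ln H)))
          with (H * ((K + alpha * (C1 + C2) + r) * (1 + Rabs (ln S) + Rabs (ln H)))) by ring.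
        rewrite (Rmult_comm r H). apply Rmult_le_compat_l; lra.
    + intros S H t v p q z w HS HH Ht.
      unfold hfun. fold c. fold m.
      replace ((m S H t + c * sigma S t * sgn p) * S * p + r * H * z - r * v -
               ((m S H t + c * sigma S t * sgn q) * S * q + r * H * w - r * v))
        with (S * (m S H t * (p - q) + c * sigma S t * (sgn p * p - sgn q * q))
              + r * H * (z - w)) by ring.
      rewrite !sgn_mul_abs. cbv beta.
      pose proof (Hsigma_nonneg S t HS Ht).
      eapply Rle_trans; [apply Rabs_triang|].
      rewrite !Rabs_mult, (Rabs_pos_eq S) by lra.
      rewrite (Rabs_pos_eq r), (Rabs_pos_eq H) by lra.
      apply Rplus_le_compat_r.
      rewrite (Rmult_assoc S). apply Rmult_le_compat_l; [lra|].
      eapply Rle_trans; [apply Rabs_triang|].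
      rewrite Rmult_plus_distr_r. apply Rplus_le_compat.
      * rewrite Rabs_mult; lra.
      * rewrite Rabs_mult, (Rabs_pos_eq (c * sigma S t)) by nra.
        apply Rmult_le_compat_l; [nra|]. apply Rabs_triang_inv2.
  - exists (C5 + alpha * C1 + 1). split; [nra|].
    intros S1 H1 S2 H2 t v p q HS1 HH1 HS2 HH2 Ht.
    unfold hfun. fold c. rewrite !sgn_div by lra.
    rewrite !ln_div' by lra.
    set (m1 := mu_tilde r rho mu sigma a b S1 H1 t).
    set (m2 := mu_tilde r rho mu sigma a b S2 H2 t).
    replace ((m1 + c * sigma S1 t * sgn p) * S1 * (p / S1) + r * H1 * (q / H1) - r * v -
             ((m2 + c * sigma S2 t * sgn p) * S2 * (p / S2) + r * H2 * (q / H2) - r * v))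
      with ((m1 - m2) * p + c * (sigma S1 t - sigma S2 t) * (sgn p * p))
      by (field; lra).
    rewrite sgn_mul_abs.
    pose proof (Hmut_lip S1 H1 S2 H2 t HS1 HH1 HS2 HH2 Ht) as L1. fold m1 m2 in L1.
    pose proof (Hsig_lip S1 S2 t HS1 HS2 Ht) as L2.
    set (A := Rabs (ln S1 - ln S2)) in *.
    set (B := Rabs (ln H1 - ln H2)).
    assert (HA : 0 <= A) by apply Rabs_pos.
    assert (HB : 0 <= B) by apply Rabs_pos.
    assert (Hp : Rabs p <= sqrt (p ^ 2 + q ^ 2)).
    { rewrite <- sqrt_Rsqr_abs. apply sqrt_le_1_alt. unfold Rsqr. nra. }
    pose proof (Rabs_pos p).
    eapply Rle_trans; [apply Rabs_triang|].
    rewrite !Rabs_mult, Rabs_Rabsolu, (Rabs_pos_eq c) by lra.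
    pose proof (Rabs_pos (m1 - m2)).
    pose proof (Rabs_pos (sigma S1 t - sigma S2 t)).
    assert (Rabs (m1 - m2) * Rabs p <= C5 * A * Rabs p) by nra.
    assert (c * Rabs (sigma S1 t - sigma S2 t) * Rabs p <= alpha * (C1 * A) * Rabs p).
    { apply Rmult_le_compat_r; [lra|]. apply Rmult_le_compat; lra. }
    set (s := sqrt (p ^ 2 + q ^ 2)) in *.
    assert (HM : 0 <= C5 + alpha * C1) by nra.
    assert (E1 : (C5 + alpha * C1) * A * Rabs p <= (C5 + alpha * C1) * A * (1 + s)).
    { apply Rmult_le_compat_l; [nra | lra]. }
    assert (E2 : (C5 + alpha * C1) * A * (1 + s) <= (C5 + alpha * C1 + 1) * (1 + s) * (A + B)).
    { assert (0 <= 1 + s) by lra.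
      assert (0 <= A * (1 + s)) by nra. assert (0 <= B * (1 + s)) by nra.
      assert (0 <= (C5 + alpha * C1) * (B * (1 + s))) by nra.
      nra. }
    nra.
Qed.
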